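(* Let $(c(t))_{t\in\mathbb{R}}$ be a bounded complex-valued cosine function (i.e. $c:\mathbb{R}\to\mathbb{C}$ bounded with $c(0)=1$ and $c(s+t)+c(s-t)=2c(s)c(t)$ for all $s,t\in\mathbb{R}$) which is discontinuous. Then for every $\alpha\in[-1,1]$ there exists a sequence $(t_n)_{n\ge1}$ of positive real numbers such that $\lim_{n\to\infty}t_n=0$ and $\lim_{n\to\infty}c(t_n)=\alpha$. *)

(* Defs.v *)
From Stdlib Require Import Reals.
From Coquelicot Require Export Coquelicot.
Open Scope R_scope.

Definition cosine_function (c : R -> C) : Prop :=
  c 0 = 1%C /\
  forall s t : R, Cplus (c (s + t)) (c (s - t)) = Cmult (RtoC 2) (Cmult (c s) (c t)).

Definition bounded_fun (c : R -> C) : Prop :=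
  exists M : R, forall t : R, Cmod (c t) <= M.

(* Main.v *)
Require Import Defs.
From Stdlib Require Import Reals.
From Coquelicot Require Import Coquelicot.
From Stdlib Require Import Lra Lia Psatz Classical ClassicalEpsilon.
Open Scope R_scope.

Lemma cos_lip : forall a b, Rabs (cos a - cos b) <= Rabs (a - b).
Proof.
  intros a b.
  destruct (MVT_abs cos (fun x => - sin x) b a) as [z [Hz _]].
  { intros z _. apply derivable_pt_lim_cos. }
  rewrite Hz. rewrite Rabs_Ropp.
  pose proof (SIN_bound z).
  assert (Rabs (sin z) <= 1) by (apply Rabs_le; lra).
  pose proof (Rabs_pos (a - b)). nra.
Qed.

Definition cosr (r : R -> R) := r 0 = 1 /\ (forall s t, r (s+t) + r (s-t) = 2 * r s * r t)
  /\ (forall t, -1 <= r t <= 1).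

Definition Pv (r : R -> R) (v : R) :=
  forall d e, 0 < d -> 0 < e -> exists t, Rabs t < d /\ Rabs (r t - v) < e.

Definition Ga r a := Pv r (cos a).

Lemma small_inv : forall e, 0 < e -> exists N : nat, / (INR N + 1) < e.
Proof.
  intros e He. destruct (archimed_cor1 e He) as [N [H1 H2]].
  exists N. eapply Rle_lt_trans; [|exact H1].
  apply Rinv_le_contravar. apply lt_0_INR; lia. lra.
Qed.

Lemma inv_mono : forall N p : nat, (N <= p)%nat -> / (INR p + 1) <= / (INR N + 1).
Proof.
  intros. apply Rinv_le_contravar. pose proof (pos_INR N); lra.
  apply le_INR in H. lra.
Qed.

Lemma inv_pos : forall p : nat, 0 < / (INR p + 1).
Proof. intros. apply Rinv_0_lt_compat. pose proof (pos_INR p); lra. Qed.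

Lemma Ga_closed : forall r a, (forall e, 0 < e -> exists x, Ga r x /\ Rabs (x - a) < e) -> Ga r a.
Proof.
  intros r a H d e Hd He.
  destruct (H (e/2)) as [x [Hx Hxa]]; [lra|].
  destruct (Hx d (e/2) Hd) as [t [Ht1 Ht2]]; [lra|].
  exists t. split; auto.
  pose proof (cos_lip x a).
  replace (r t - cos a) with ((r t - cos x) + (cos x - cos a)) by ring.
  eapply Rle_lt_trans. apply Rabs_triang. lra.
Qed.

Lemma Ga_opp : forall r a, Ga r a -> Ga r (-a).
Proof. unfold Ga. intros. rewrite cos_neg. auto. Qed.

Lemma Ga_0 : forall r, cosr r -> Ga r 0.
Proof.
  intros r [H0 _] d e Hd He. exists 0. rewrite Rabs_R0, H0, cos_0.
  split; auto. rewrite Rminus_eq_0, Rabs_R0; auto.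
Qed.

Lemma r_even : forall r, cosr r -> forall t, r (- t) = r t.
Proof.
  intros r [H0 [Hf _]] t. specialize (Hf 0 t).
  rewrite Rplus_0_l, Rminus_0_l, H0 in Hf. lra.
Qed.

Lemma r_prod : forall r, cosr r -> forall s t, r (s+t) * r (s-t) = r s ^ 2 + r t ^ 2 - 1.
Proof.
  intros r Hr s t. pose proof Hr as [H0 [Hf _]].
  pose proof (Hf (s+t) (s-t)) as E.
  replace (s + t + (s - t)) with (s+s) in E by ring.
  replace (s + t - (s - t)) with (t+t) in E by ring.
  pose proof (Hf s s) as Es. pose proof (Hf t t) as Et.
  rewrite Rminus_eq_0, H0 in Es, Et. nra.
Qed.

Lemma prod_small : forall x A B e, 0 < e -> Rabs ((x - A) * (x - B)) < e * e ->
  Rabs (x - A) < e \/ Rabs (x - B) < e.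
Proof.
  intros. destruct (Rlt_or_le (Rabs (x - A)) e); auto.
  destruct (Rlt_or_le (Rabs (x - B)) e); auto.
  rewrite Rabs_mult in H0. exfalso.
  assert (e * e <= Rabs (x - A) * Rabs (x - B)).
  { apply Rmult_le_compat; lra. } lra.
Qed.

Lemma bound8 : forall x u v u' v' e, Rabs x <= 1 -> Rabs u <= 1 -> Rabs v <= 1 ->
  Rabs u' <= 1 -> Rabs v' <= 1 -> Rabs (u' - u) <= e -> Rabs (v' - v) <= e ->
  Rabs (-2 * x * (u' * v' - u * v) + (u'^2 - u^2) + (v'^2 - v^2)) <= 8 * e.
Proof.
  intros.
  replace (-2 * x * (u' * v' - u * v) + (u'^2 - u^2) + (v'^2 - v^2)) with
   ((-2 * x * u') * (v' - v) + (-2 * x * v) * (u' - u) + (u' + u) * (u' - u) + (v' + v) * (v' - v)) by ring.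
  set (T1 := -2 * x * u' * (v' - v)). set (T2 := -2 * x * v * (u' - u)).
  set (T3 := (u' + u) * (u' - u)). set (T4 := (v' + v) * (v' - v)).
  assert (Rabs (T1 + T2 + T3 + T4) <= Rabs T1 + Rabs T2 + Rabs T3 + Rabs T4).
  { pose proof (Rabs_triang (T1 + T2 + T3) T4). pose proof (Rabs_triang (T1 + T2) T3).
    pose proof (Rabs_triang T1 T2). lra. }
  eapply Rle_trans; [exact H6|]. unfold T1, T2, T3, T4.
  rewrite !Rabs_mult.
  assert (Rabs (-2) = 2) by (unfold Rabs; destruct Rcase_abs; lra).
  rewrite H7.
  assert (Rabs (u' + u) <= 2) by (eapply Rle_trans; [apply Rabs_triang| lra]).
  assert (Rabs (v' + v) <= 2) by (eapply Rle_trans; [apply Rabs_triang| lra]).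
  pose proof (Rabs_pos x). pose proof (Rabs_pos u'). pose proof (Rabs_pos v).
  pose proof (Rabs_pos (u'-u)). pose proof (Rabs_pos (v'-v)).
  assert (2 * Rabs x * Rabs u' * Rabs (v' - v) <= 2 * e).
  { assert (Rabs x * Rabs u' <= 1) by nra. nra. }
  assert (2 * Rabs x * Rabs v * Rabs (u' - u) <= 2 * e).
  { assert (Rabs x * Rabs v <= 1) by nra. nra. }
  nra.
Qed.

Lemma Ga_plus : forall r, cosr r -> forall a b, Ga r a -> Ga r b -> Ga r (a + b).
Proof.
  intros r Hr a b Ha Hb d e Hd He.
  pose proof Hr as [H0 [Hf Hb1]].
  set (e' := e * e / 9).
  assert (He' : 0 < e') by (unfold e'; nra).
  destruct (Ha (d/2) e') as [s [Hs1 Hs2]]; try lra.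
  destruct (Hb (d/2) e') as [t [Ht1 Ht2]]; try lra.
  set (x := cos (a+b)).
  assert (Hq : (x - r (s+t)) * (x - r (s-t)) =
     -2 * x * (r s * r t - cos a * cos b) + (r s ^2 - cos a ^2) + (r t ^2 - cos b ^2)).
  { assert (x^2 - 2 * cos a * cos b * x + cos a ^2 + cos b ^2 - 1 = 0).
    { unfold x. rewrite cos_plus. pose proof (sin2 a). pose proof (sin2 b).
      unfold Rsqr in *. nra. }
    pose proof (Hf s t). pose proof (r_prod r Hr s t). nra. }
  assert (Habs : forall y, -1 <= y <= 1 -> Rabs y <= 1) by (intros; apply Rabs_le; lra).
  pose proof (bound8 x (cos a) (cos b) (r s) (r t) e') as B.
  rewrite <- Hq in B.
  assert (Rabs ((x - r (s + t)) * (x - r (s - t))) < e * e).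
  { eapply Rle_lt_trans. apply B; try (apply Habs; try apply COS_bound; auto); lra.
    unfold e'; nra. }
  destruct (prod_small _ _ _ _ He H) as [H1|H1].
  - exists (s+t). split. eapply Rle_lt_trans. apply Rabs_triang. lra.
    rewrite <- Rabs_Ropp. replace (- (r (s+t) - x)) with (x - r (s+t)) by ring. auto.
  - exists (s-t). split. eapply Rle_lt_trans. apply Rabs_triang. rewrite Rabs_Ropp. lra.
    rewrite <- Rabs_Ropp. replace (- (r (s-t) - x)) with (x - r (s-t)) by ring. auto.
Qed.


Lemma Ga_minus : forall r, cosr r -> forall a b, Ga r a -> Ga r b -> Ga r (a - b).
Proof. intros. unfold Rminus. apply Ga_plus; auto. apply Ga_opp; auto. Qed.

Lemma Ga_mult : forall r, cosr r -> forall a, Ga r a -> forall k : nat, Ga r (INR k * a).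
Proof.
  intros r Hr a Ha k. induction k.
  - simpl. rewrite Rmult_0_l. apply Ga_0; auto.
  - rewrite S_INR. replace ((INR k + 1) * a) with (INR k * a + a) by ring.
    apply Ga_plus; auto.
Qed.

Lemma cheb : forall r, cosr r -> forall t th, r t = cos th ->
  forall n, r (INR n * t) = cos (INR n * th) /\ r (INR (S n) * t) = cos (INR (S n) * th).
Proof.
  intros r Hr t th Ht n. pose proof Hr as [H0 [Hf _]]. induction n.
  - simpl. rewrite !Rmult_0_l, !Rmult_1_l, H0, cos_0. auto.
  - destruct IHn as [I1 I2]. split; auto.
    pose proof (Hf (INR (S n) * t) t) as E.
    replace (INR (S n) * t - t) with (INR n * t) in E by (rewrite S_INR; ring).
    replace (INR (S n) * t + t) with (INR (S (S n)) * t) in E by (rewrite (S_INR (S n)); ring).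
    rewrite I1, I2, Ht in E.
    pose proof (cos_plus (INR (S n) * th) th) as Cp. pose proof (cos_minus (INR (S n) * th) th) as Cm.
    replace (INR (S n) * th - th) with (INR n * th) in Cm by (rewrite S_INR; ring).
    replace (INR (S n) * th + th) with (INR (S (S n)) * th) in Cp by (rewrite (S_INR (S n)); ring).
    lra.
Qed.

Lemma BW' : forall (u : nat -> R) a b, (forall k, a <= u k <= b) ->
  exists l, a <= l <= b /\ forall e, 0 < e -> forall N, exists p, (N <= p)%nat /\ Rabs (u p - l) < e.
Proof.
  intros u a b Hu.
  destruct (Bolzano_Weierstrass u _ (compact_P3 a b) Hu) as [l Hl].
  assert (Hl' : forall e, 0 < e -> forall N, exists p, (N <= p)%nat /\ Rabs (u p - l) < e).
  { intros e He N. destruct (Hl (disc l (mkposreal e He)) N) as [p [Hp1 Hp2]].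
    - exists (mkposreal e He). intros y Hy. exact Hy.
    - exists p. split; auto. }
  exists l. split; auto. split.
  - destruct (Rle_or_lt a l); auto. destruct (Hl' (a - l) ltac:(lra) 0%nat) as [p [_ Hp]].
    specialize (Hu p). apply Rabs_def2 in Hp. lra.
  - destruct (Rle_or_lt l b); auto. destruct (Hl' (l - b) ltac:(lra) 0%nat) as [p [_ Hp]].
    specialize (Hu p). apply Rabs_def2 in Hp. lra.
Qed.

Lemma adh_G : forall r, cosr r -> forall t : nat -> R, (forall k, Rabs (t k) < / (INR k + 1)) ->
  exists b, 0 <= b <= PI /\ Ga r b /\ forall e, 0 < e -> forall N, exists p, (N <= p)%nat /\
     Rabs (acos (r (t p)) - b) < e /\ Rabs (r (t p) - cos b) < e.
Proof.
  intros r Hr t Ht. pose proof Hr as [_ [_ Hb]].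
  destruct (BW' (fun k => acos (r (t k))) 0 PI) as [l [Hl1 Hl2]].
  { intros. apply acos_bound. }
  assert (Hl3 : forall e, 0 < e -> forall N, exists p, (N <= p)%nat /\
     Rabs (acos (r (t p)) - l) < e /\ Rabs (r (t p) - cos l) < e).
  { intros e He N. destruct (Hl2 e He N) as [p [Hp1 Hp2]]. exists p. repeat split; auto.
    rewrite <- (cos_acos (r (t p))) by apply Hb.
    eapply Rle_lt_trans. apply cos_lip. auto. }
  exists l. repeat split; try lra; auto.
  intros d e Hd He. destruct (small_inv d Hd) as [N HN].
  destruct (Hl3 e He N) as [p [Hp1 [_ Hp2]]]. exists (t p). split; auto.
  eapply Rlt_le_trans. apply Ht. eapply Rle_trans. apply inv_mono; eauto. lra.
Qed.

Lemma Ga_div : forall r, cosr r -> forall a, Ga r a -> forall n : nat, (1 <= n)%nat ->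
  exists b, Ga r b /\ cos (INR n * b) = cos a.
Proof.
  intros r Hr a Ha n Hn. pose proof Hr as [_ [_ Hb]].
  assert (Hn' : 1 <= INR n) by (apply (le_INR 1); auto).
  assert (forall k : nat, exists t, Rabs t < / (INR k + 1) /\ Rabs (r t - cos a) < / (INR k + 1)).
  { intro k. apply Ha; apply inv_pos. }
  destruct (choice _ H) as [t Ht].
  destruct (adh_G r Hr (fun k => t k / INR n)) as [b [_ [Gb Hb2]]].
  { intros k. unfold Rdiv. rewrite Rabs_mult, Rabs_inv, (Rabs_pos_eq (INR n)) by lra.
    destruct (Ht k) as [Ht1 _]. pose proof (Rabs_pos (t k)).
    assert (/ INR n <= 1). { rewrite <- Rinv_1. apply Rinv_le_contravar; lra. }
    assert (0 < / INR n) by (apply Rinv_0_lt_compat; lra). nra. }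
  exists b. split; auto.
  apply Rminus_diag_uniq. apply Rabs_eq_0.
  apply Rle_antisym; [|apply Rabs_pos].
  apply le_epsilon. intros e He. rewrite Rplus_0_l.
  destruct (small_inv (e/2)) as [N HN]; [lra|].
  destruct (Hb2 (e / 2 / INR n)) with (N := N) as [p [Hp1 [Hp2 _]]].
  { apply Rdiv_lt_0_compat; lra. }
  set (th := acos (r (t p / INR n))).
  assert (E : r (t p) = cos (INR n * th)).
  { assert (Eth : r (t p / INR n) = cos th) by (unfold th; rewrite cos_acos; auto).
    destruct (cheb r Hr (t p / INR n) th Eth n) as [E _].
    rewrite <- E. f_equal. field. lra. }
  destruct (Ht p) as [_ Hp3].
  pose proof (cos_lip (INR n * b) (INR n * th)).
  replace (INR n * b - INR n * th) with (INR n * (b - th)) in H0 by ring.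
  rewrite Rabs_mult, (Rabs_pos_eq (INR n)) in H0 by lra.
  rewrite <- Rabs_Ropp in Hp2. replace (- (acos (r (t p / INR n)) - b)) with (b - th) in Hp2
    by (unfold th; ring).
  assert (INR n * Rabs (b - th) < e / 2).
  { apply (Rmult_lt_compat_l (INR n)) in Hp2; [|lra].
    replace (INR n * (e / 2 / INR n)) with (e/2) in Hp2 by (field; lra). auto. }
  replace (cos (INR n * b) - cos a) with ((cos (INR n * b) - cos (INR n * th)) + (r (t p) - cos a))
    by (rewrite E; ring).
  eapply Rle_trans. apply Rabs_triang.
  assert (Rabs (r (t p) - cos a) < e / 2).
  { eapply Rlt_le_trans. apply Hp3. eapply Rle_trans. apply inv_mono; eauto. lra. }
  lra.
Qed.


Lemma floor_nat : forall x g, 0 <= x -> 0 < g -> exists k : nat, INR k * g <= x < (INR k + 1) * g.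
Proof.
  intros x g Hx Hg. destruct (archimed (x / g)) as [H1 H2].
  assert (0 <= x / g) by (apply Rdiv_le_0_compat; lra).
  assert (Hz : (1 <= up (x / g))%Z). { assert (Hp : (0 < up (x/g))%Z) by (apply lt_IZR; simpl; lra). lia. }
  exists (Z.to_nat (up (x/g) - 1)).
  rewrite INR_IZR_INZ, Znat.Z2Nat.id by lia. rewrite minus_IZR. simpl.
  assert (x = (x / g) * g) by (field; lra).
  split; nra.
Qed.

Lemma cos_2kpi : forall k : nat, cos (INR k * (2 * PI)) = 1.
Proof.
  intros. pose proof (cos_period 0 k). rewrite Rplus_0_l, cos_0 in H.
  rewrite <- H. f_equal. ring.
Qed.

Lemma Ga_abs : forall r a, Ga r a -> Ga r (Rabs a).
Proof. intros. unfold Rabs. destruct Rcase_abs; auto. apply Ga_opp; auto. Qed.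

Lemma cos_abs : forall a, cos (Rabs a) = cos a.
Proof. intros. unfold Rabs. destruct Rcase_abs; auto. apply cos_neg. Qed.

Lemma small_elems : forall r, cosr r -> (exists a, Ga r a /\ cos a < 1) ->
  forall gam, 0 < gam -> exists x, Ga r x /\ 0 < x < gam.
Proof.
  intros r Hr [a [Ga_a Ca]] gam Hgam.
  apply NNPP. intro Hn.
  assert (Hlow : forall x, Ga r x -> 0 < x -> gam <= x).
  { intros x Gx Px. destruct (Rle_or_lt gam x); auto. exfalso. apply Hn. exists x. auto. }
  assert (Ha0 : 0 < Rabs a).
  { destruct (Rabs_pos a) as [|E]; auto. symmetry in E. apply Rabs_eq_0 in E. subst.
    rewrite cos_0 in Ca. lra. }
  set (E := fun y => Ga r (- y) /\ 0 < - y).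
  destruct (completeness E) as [l [Hub Hlub]].
  { exists (- gam). intros y [Gy Py]. specialize (Hlow _ Gy Py). lra. }
  { exists (- Rabs a). unfold E. rewrite Ropp_involutive. split; auto. apply Ga_abs; auto. }
  set (g := - l).
  assert (g1 : forall x, Ga r x -> 0 < x -> g <= x).
  { intros x Gx Px. assert (E (- x)) by (unfold E; rewrite Ropp_involutive; auto).
    specialize (Hub _ H). unfold g. lra. }
  assert (g2 : forall e, 0 < e -> exists x, Ga r x /\ 0 < x /\ x < g + e).
  { intros e He. apply NNPP. intro Hc.
    assert (is_upper_bound E (- (g + e))).
    { intros y [Gy Py]. destruct (Rle_or_lt (g+e) (- y)) as [Hle|Hlt]; [lra|].
      exfalso. apply Hc. exists (- y). auto. }
    specialize (Hlub _ H). unfold g in *. lra. }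
  assert (g3 : gam <= g).
  { assert (l <= - gam). { apply Hlub. intros y [Gy Py]. specialize (Hlow _ Gy Py). lra. }
    unfold g; lra. }
  assert (Gg : Ga r g).
  { apply Ga_closed. intros e He. destruct (g2 e He) as [x [Gx [Px Hx]]].
    exists x. split; auto. specialize (g1 x Gx Px). rewrite Rabs_pos_eq; lra. }
  assert (g4 : forall x, Ga r x -> 0 <= x -> exists k : nat, x = INR k * g).
  { intros x Gx Px. destruct (floor_nat x g Px) as [k [Hk1 Hk2]]; [lra|].
    exists k. assert (Gy : Ga r (x - INR k * g)) by (apply Ga_minus; auto; apply Ga_mult; auto).
    destruct (Rle_or_lt (x - INR k * g) 0). lra.
    specialize (g1 _ Gy H). lra. }
  assert (G2pi : Ga r (2 * PI)).
  { unfold Ga. rewrite cos_2PI. pose proof (Ga_0 r Hr). unfold Ga in H. rewrite cos_0 in H. auto. }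
  destruct (g4 (2 * PI) G2pi) as [m Hm]. { pose proof PI_RGT_0; lra. }
  destruct m as [|[|m]].
  - simpl in Hm. pose proof PI_RGT_0. lra.
  - simpl in Hm. rewrite Rmult_1_l in Hm.
    destruct (g4 (Rabs a)) as [k Hk]. apply Ga_abs; auto. apply Rabs_pos.
    rewrite <- cos_abs, Hk, <- Hm, cos_2kpi in Ca. lra.
  - set (M := S (S m)) in *.
    assert (HM : 2 <= INR M) by (unfold M; rewrite !S_INR; pose proof (pos_INR m); lra).
    destruct (Ga_div r Hr g Gg M ltac:(unfold M; lia)) as [b [Gb Cb]].
    destruct (floor_nat (Rabs b) (2 * PI)) as [k [Hk1 Hk2]]. apply Rabs_pos. pose proof PI_RGT_0; lra.
    set (b' := Rabs b - INR k * (2 * PI)).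
    assert (Gb' : Ga r b') by (apply Ga_minus; auto; [apply Ga_abs; auto| apply Ga_mult; auto]).
    destruct (g4 b' Gb') as [j Hj]. unfold b'; lra.
    assert (cos (INR M * b) = 1).
    { assert (cos (INR M * b) = cos (INR M * Rabs b)).
      { unfold Rabs. destruct Rcase_abs; auto. rewrite <- cos_neg. f_equal. ring. }
      rewrite H. pose proof (cos_period (INR M * b') (M * k)).
      replace (INR M * b' + 2 * INR (M * k) * PI) with (INR M * Rabs b) in H0
        by (unfold b'; rewrite mult_INR; ring).
      rewrite H0, Hj. replace (INR M * (INR j * g)) with (INR j * (2 * PI))
        by (rewrite Hm; ring). apply cos_2kpi. }
    rewrite Cb in H.
    assert (0 < g <= PI) by (split; nra).
    pose proof (cos_2a_sin (g / 2)). replace (2 * (g / 2)) with g in H1 by field.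
    assert (0 < sin (g / 2)) by (apply sin_gt_0; lra). nra.
Qed.


Lemma nontriv : forall r, cosr r ->
  (exists e0, 0 < e0 /\ forall d, 0 < d -> exists t, Rabs t < d /\ r t <= 1 - e0) ->
  exists a, Ga r a /\ cos a < 1.
Proof.
  intros r Hr [e0 [He0 HD]].
  assert (forall k : nat, exists t, Rabs t < / (INR k + 1) /\ r t <= 1 - e0).
  { intros. apply HD. apply inv_pos. }
  destruct (choice _ H) as [t Ht].
  destruct (adh_G r Hr t) as [b [_ [Gb Hb]]]. { intros k. apply Ht. }
  exists b. split; auto.
  destruct (Rle_or_lt (cos b) (1 - e0)). lra.
  destruct (Hb (cos b - (1 - e0)) ltac:(lra) 0%nat) as [p [_ [_ Hp]]].
  destruct (Ht p) as [_ Hp']. apply Rabs_def2 in Hp. lra.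
Qed.

Lemma all_G : forall r, cosr r -> (exists a, Ga r a /\ cos a < 1) -> forall b, 0 <= b -> Ga r b.
Proof.
  intros r Hr Hn b Hb. apply Ga_closed. intros e He.
  destruct (small_elems r Hr Hn e He) as [x [Gx [Px Px']]].
  destruct (floor_nat b x Hb Px) as [k [Hk1 Hk2]].
  exists (INR k * x). split. apply Ga_mult; auto.
  rewrite <- Rabs_Ropp. rewrite Rabs_pos_eq; lra.
Qed.

Lemma pos_t : forall r, cosr r -> (exists a, Ga r a /\ cos a < 1) ->
  forall al, -1 <= al <= 1 -> forall d e, 0 < d -> 0 < e ->
  exists t, 0 < t < d /\ Rabs (r t - al) < e.
Proof.
  intros r Hr Hn al Hal d e Hd He. pose proof Hr as [H0 _].
  set (al' := if Rle_dec al 0 then al else al - Rmin e 1 / 2).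
  assert (Hal' : -1 <= al' < 1 /\ Rabs (al - al') <= e / 2).
  { unfold al'. destruct Rle_dec.
    - rewrite Rminus_eq_0, Rabs_R0. lra.
    - pose proof (Rmin_l e 1). pose proof (Rmin_r e 1).
      assert (0 < Rmin e 1) by (apply Rmin_glb_lt; lra).
      rewrite Rabs_pos_eq; lra. }
  assert (Pal' : Pv r al').
  { pose proof (all_G r Hr Hn (acos al') (proj1 (acos_bound al'))).
    unfold Ga in H. rewrite cos_acos in H; auto. lra. }
  destruct (Pal' d (Rmin (e/2) (1 - al'))) as [t [Ht1 Ht2]]; auto.
  { apply Rmin_glb_lt; lra. }
  pose proof (Rmin_l (e/2) (1 - al')). pose proof (Rmin_r (e/2) (1 - al')).
  assert (t <> 0).
  { intro. subst. rewrite H0 in Ht2. rewrite Rabs_pos_eq in Ht2; lra. }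
  exists (Rabs t). split. split; auto. apply Rabs_pos_lt; auto.
  assert (r (Rabs t) = r t).
  { unfold Rabs. destruct Rcase_abs; auto. apply r_even; auto. }
  rewrite H3.
  replace (r t - al) with ((r t - al') + (al' - al)) by ring.
  eapply Rle_lt_trans. apply Rabs_triang. rewrite <- Rabs_Ropp in Hal'.
  replace (- (al - al')) with (al' - al) in Hal' by ring. lra.
Qed.

Ltac sqp := repeat match goal with |- context [?a ^ 2] => assert_fails (assert (0 <= a ^ 2) by assumption); let h := fresh in pose proof (pow2_ge_0 a) as h end; nra.

Definition ff (x y : R) := sqrt ((x - 1)^2 + y^2) + sqrt ((x + 1)^2 + y^2).

Lemma sq_facts : forall a, 0 <= a -> 0 <= sqrt a /\ sqrt a * sqrt a = a.
Proof. intros. split. apply sqrt_pos. apply sqrt_sqrt; auto. Qed.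

Lemma ff_double : forall x y X Y, X = 2 * (x^2 - y^2) - 1 -> Y = 4 * x * y ->
  ff X Y = ff x y ^ 2 - 2.
Proof.
  intros x y X Y HX HY. unfold ff.
  destruct (sq_facts ((x - 1)^2 + y^2) ltac:(sqp)) as [P0 P2].
  destruct (sq_facts ((x + 1)^2 + y^2) ltac:(sqp)) as [Q0 Q2].
  set (P := sqrt ((x - 1)^2 + y^2)) in *. set (Q := sqrt ((x + 1)^2 + y^2)) in *.
  subst X Y.
  rewrite (sqrt_lem_1 _ (2 * P * Q)).
  2: nra. 2: apply Rmult_le_pos; nra.
  2: { replace ((2 * P * Q) * (2 * P * Q)) with (4 * (P * P) * (Q * Q)) by ring.
       rewrite P2, Q2. ring. }
  rewrite (sqrt_lem_1 _ (2 * (x^2 + y^2))).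
  2: nra. 2: nra. 2: ring.
  replace ((P + Q)^2) with (P * P + Q * Q + 2 * P * Q) by ring.
  rewrite P2, Q2. ring.
Qed.

Lemma ff_ge2 : forall x y, 2 <= ff x y.
Proof.
  intros. unfold ff.
  destruct (sq_facts ((x - 1)^2 + y^2) ltac:(sqp)) as [P0 P2].
  destruct (sq_facts ((x + 1)^2 + y^2) ltac:(sqp)) as [Q0 Q2].
  set (P := sqrt ((x - 1)^2 + y^2)) in *. set (Q := sqrt ((x + 1)^2 + y^2)) in *.
  assert (1 - x <= P) by nra. assert (1 + x <= Q) by nra. lra.
Qed.

Lemma ff_eq2 : forall x y, ff x y = 2 -> y = 0 /\ -1 <= x <= 1.
Proof.
  intros x y H. unfold ff in H.
  destruct (sq_facts ((x - 1)^2 + y^2) ltac:(sqp)) as [P0 P2].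
  destruct (sq_facts ((x + 1)^2 + y^2) ltac:(sqp)) as [Q0 Q2].
  set (P := sqrt ((x - 1)^2 + y^2)) in *. set (Q := sqrt ((x + 1)^2 + y^2)) in *.
  assert (HPQ : (P - Q) * (P + Q) = - 4 * x) by nra.
  rewrite H in HPQ. assert (P = 1 - x) by lra. assert (Q = 1 + x) by lra.
  split; nra.
Qed.

Lemma abs_le_sqrt : forall x y, Rabs x <= sqrt (x^2 + y^2).
Proof.
  intros. rewrite <- sqrt_Rsqr_abs. apply sqrt_le_1_alt. unfold Rsqr. nra.
Qed.

Lemma ff_bound : forall x y, ff x y <= 2 * sqrt (x^2 + y^2) + 2.
Proof.
  intros. unfold ff.
  destruct (sq_facts ((x - 1)^2 + y^2) ltac:(sqp)) as [P0 P2].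
  destruct (sq_facts ((x + 1)^2 + y^2) ltac:(sqp)) as [Q0 Q2].
  destruct (sq_facts (x^2 + y^2) ltac:(sqp)) as [S0 S2].
  set (P := sqrt ((x - 1)^2 + y^2)) in *. set (Q := sqrt ((x + 1)^2 + y^2)) in *.
  set (S := sqrt (x^2 + y^2)) in *.
  pose proof (abs_le_sqrt x y). fold S in H.
  assert (P <= S + 1). { assert (P * P <= (S+1) * (S+1)). { rewrite P2. 
    assert (-x <= Rabs x) by (rewrite <- Rabs_Ropp; apply Rle_abs). nra. } nra. }
  assert (Q <= S + 1). { assert (Q * Q <= (S+1) * (S+1)). { rewrite Q2.
    assert (x <= Rabs x) by apply Rle_abs. nra. } nra. }
  lra.
Qed.

Lemma pow4 : forall n, 1 <= 4 ^ n /\ INR n <= 4 ^ n.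
Proof.
  induction n. simpl. lra. rewrite S_INR. simpl. lra.
Qed.

Lemma c_real : forall c, cosine_function c -> bounded_fun c ->
  forall t, snd (c t) = 0 /\ -1 <= fst (c t) <= 1.
Proof.
  intros c [H0 Hf] [M HM].
  assert (Hd : forall t, ff (fst (c (t + t))) (snd (c (t + t))) = ff (fst (c t)) (snd (c t)) ^ 2 - 2).
  { intros t. apply ff_double.
    - pose proof (f_equal fst (Hf t t)) as E. rewrite Rminus_eq_0, H0 in E. simpl in E. lra.
    - pose proof (f_equal snd (Hf t t)) as E. rewrite Rminus_eq_0, H0 in E. simpl in E. lra. }
  set (F := fun t => ff (fst (c t)) (snd (c t)) - 2).
  assert (Fge : forall t, 0 <= F t) by (intros; unfold F; pose proof (ff_ge2 (fst (c t)) (snd (c t))); lra).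
  assert (Fle : forall t, F t <= 2 * M).
  { intros. unfold F. pose proof (ff_bound (fst (c t)) (snd (c t))). specialize (HM t).
    unfold Cmod in HM. lra. }
  assert (Fit : forall n t, exists u, 4 ^ n * F t <= F u).
  { induction n; intros t. exists t. simpl; lra.
    destruct (IHn t) as [u Hu]. exists (u + u). unfold F at 2. rewrite Hd. fold (F u) in *.
    specialize (Fge u). simpl. unfold F in Fge, Hu |- *.
    set (w := ff (fst (c u)) (snd (c u))) in *. pose proof (pow2_ge_0 (w - 2)). nra. }
  intros t.
  assert (F t = 0).
  { destruct (Fge t) as [Hlt|]; auto. exfalso.
    destruct (archimed (2 * M / F t)) as [Ha _].
    pose proof (Fge t).
    assert (0 <= 2 * M) by (specialize (Fle t); lra).
    assert (Hz : (0 <= up (2 * M / F t))%Z).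
    { apply le_IZR. simpl. assert (0 <= 2 * M / F t) by (apply Rdiv_le_0_compat; lra). lra. }
    set (n := Z.to_nat (up (2 * M / F t))).
    assert (Hn : INR n > 2 * M / F t) by (unfold n; rewrite INR_IZR_INZ, Znat.Z2Nat.id; auto).
    destruct (Fit n t) as [u Hu]. specialize (Fle u). destruct (pow4 n).
    assert (2 * M < INR n * F t).
    { apply (Rmult_lt_compat_r (F t)) in Hn; auto.
      replace (2 * M / F t * F t) with (2 * M) in Hn by (field; lra). lra. }
    nra. }
  unfold F in H. apply ff_eq2. lra.
Qed.


Lemma ballR : forall (a b : R) (eps : posreal), ball a eps b <-> Rabs (b - a) < eps.
Proof. intros. unfold ball. simpl. unfold AbsRing_ball, abs, minus, plus, opp. simpl. tauto. Qed.

Lemma ballC : forall a b (eps : posreal), Rabs (b - a) < eps -> ball (RtoC a) eps (RtoC b).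
Proof.
  intros. unfold ball. simpl. unfold prod_ball. simpl. split.
  - apply ballR. auto.
  - apply ballR. rewrite Rminus_eq_0, Rabs_R0. apply cond_pos.
Qed.

Lemma cont_from : forall r, cosr r ->
  (forall e0, 0 < e0 -> exists d, 0 < d /\ forall h, Rabs h < d -> 1 - e0 < r h) ->
  forall x eps, 0 < eps -> exists d, 0 < d /\ forall y, Rabs (y - x) < d -> Rabs (r y - r x) < eps.
Proof.
  intros r Hr Hc x eps Heps. pose proof Hr as [H0 [Hf Hb]].
  set (e' := Rmin (eps/2) (eps * eps / 8)).
  assert (He' : 0 < e') by (apply Rmin_glb_lt; nra).
  destruct (Hc e' He') as [d [Hd Hd']]. exists d. split; auto.
  intros y Hy. set (h := y - x). replace y with (x + h) by (unfold h; ring).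
  specialize (Hd' h Hy).
  pose proof (Hf x h) as S. pose proof (r_prod r Hr x h) as P.
  pose proof (Hb x). pose proof (Hb h). pose proof (Hb (x+h)). pose proof (Hb (x-h)).
  pose proof (Rmin_l (eps/2) (eps * eps / 8)) as M1. pose proof (Rmin_r (eps/2) (eps * eps / 8)) as M2.
  fold e' in M1, M2.
  set (D := r (x+h) - r (x-h)).
  assert (HD : D * D = 4 * (1 - r x ^ 2) * (1 - r h ^ 2)).
  { unfold D. replace ((r (x + h) - r (x - h)) * (r (x + h) - r (x - h))) with
      ((r (x+h) + r (x-h))^2 - 4 * (r (x+h) * r (x-h))) by ring.
    rewrite S, P. ring. }
  assert (HD2 : D * D < eps * eps).
  { rewrite HD. 
    assert (Ex : 1 - r x ^ 2 = (1 - r x) * (1 + r x)) by ring.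
    assert (Eh : 1 - r h ^ 2 = (1 - r h) * (1 + r h)) by ring.
    rewrite Ex, Eh.
    assert (0 <= (1 - r x) * (1 + r x) <= 1).
    { split. apply Rmult_le_pos; lra. pose proof (pow2_ge_0 (r x)). simpl in *. nra. }
    assert (0 <= (1 - r h) * (1 + r h) <= 2 * (1 - r h)).
    { split. apply Rmult_le_pos; lra. nra. }
    assert (4 * ((1 - r x) * (1 + r x)) * ((1 - r h) * (1 + r h)) <= 4 * ((1 - r h) * (1 + r h))) by nra.
    lra. }
  assert (HD3 : Rabs D < eps).
  { apply Rabs_def1; nra. }
  assert (E : r (x + h) - r x = r x * (r h - 1) + D / 2) by (unfold D; lra).
  rewrite E. eapply Rle_lt_trans. apply Rabs_triang.
  rewrite Rabs_mult. unfold Rdiv. rewrite Rabs_mult, Rabs_inv, (Rabs_pos_eq 2) by lra.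
  assert (Rabs (r x) <= 1) by (apply Rabs_le; lra).
  assert (Rabs (r h - 1) < eps / 2) by (rewrite Rabs_left1; lra).
  pose proof (Rabs_pos (r x)). pose proof (Rabs_pos (r h - 1)). nra.
Qed.

Theorem proposition3p1 (c : R -> C) :
  cosine_function c ->
  bounded_fun c ->
  ~ (forall x : R, continuous c x) ->
  forall alpha : R, -1 <= alpha <= 1 ->
  exists t : nat -> R,
    (forall n, 0 < t n) /\
    is_lim_seq t 0 /\
    filterlim (fun n => c (t n)) eventually (locally (RtoC alpha)).
Proof.
  intros Hc Hbd Hdisc alpha Hal.
  pose proof (c_real c Hc Hbd) as Hre.
  set (r := fun t => fst (c t)).
  assert (Hct : forall t, c t = RtoC (r t)).
  { intros t. unfold r, RtoC. destruct (c t) as [u v] eqn:E. simpl.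
    destruct (Hre t) as [Hs _]. rewrite E in Hs. simpl in Hs. subst. auto. }
  assert (Hr : cosr r).
  { destruct Hc as [H0 Hf]. split; [|split].
    - unfold r. rewrite H0. reflexivity.
    - intros s t. pose proof (f_equal fst (Hf s t)) as E. simpl in E.
      rewrite (Hct s), (Hct t) in E. simpl in E. unfold r at 1 2. lra.
    - intros t. apply Hre. }
  assert (HD : exists e0, 0 < e0 /\ forall d, 0 < d -> exists t, Rabs t < d /\ r t <= 1 - e0).
  { apply NNPP. intro HnD. apply Hdisc. intros x.
    assert (Hc' : forall e0, 0 < e0 -> exists d, 0 < d /\ forall h, Rabs h < d -> 1 - e0 < r h).
    { intros e0 He0. apply NNPP. intro Hn. apply HnD. exists e0. split; auto.
      intros d Hd. apply NNPP. intro Hn2. apply Hn. exists d. split; auto.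
      intros h Hh. destruct (Rlt_or_le (1 - e0) (r h)); auto. exfalso. apply Hn2.
      exists h. auto. }
    apply filterlim_locally. intros eps.
    destruct (cont_from r Hr Hc' x eps (cond_pos eps)) as [d [Hd Hd']].
    exists (mkposreal d Hd). intros y Hy. apply ballR in Hy. simpl in Hy.
    rewrite (Hct x), (Hct y). apply ballC. auto. }
  pose proof (nontriv r Hr HD) as Hn.
  assert (forall n : nat, exists t, 0 < t < / (INR n + 1) /\ Rabs (r t - alpha) < / (INR n + 1)).
  { intros n. apply (pos_t r Hr Hn alpha Hal); apply inv_pos. }
  destruct (choice _ H) as [t Ht].
  exists t. split; [|split].
  - intros n. apply Ht.
  - apply is_lim_seq_spec. intros eps. destruct (small_inv eps (cond_pos eps)) as [N HN].
    exists N. intros n Hn'. destruct (Ht n) as [[H1 H2] _].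
    rewrite Rminus_0_r, Rabs_pos_eq by lra.
    pose proof (inv_mono N n Hn'). lra.
  - apply filterlim_locally. intros eps. destruct (small_inv eps (cond_pos eps)) as [N HN].
    exists N. intros n Hn'. rewrite Hct. apply ballC. destruct (Ht n) as [_ H2].
    pose proof (inv_mono N n Hn'). lra.
Qed.
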